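(* Let $a,b\in\mathbb{R}\setminus\{0\}$, let $\nu_1,\nu_2:\mathbb{R}^2\to\mathbb{R}$ be smooth, and consider the two-parameter family of Hamiltonians on $(\mathbb{R}^2, dq\wedge dp)$ $$H_{j,t}(q,p)=\frac{a}{2}p^2+\frac{b}{6}q^6+\frac{\nu_1(j,t)}{2}q^2+\frac{\nu_2(j,t)}{4}q^4,$$ where $\nu_1$ satisfies $$\nu_1(0,0)=0,\qquad \frac{\partial \nu_1}{\partial j}(0,0)=0,\qquad \frac{\partial^2 \nu_1}{\partial j^2}(0,0)\neq 0,\qquad \frac{\partial \nu_1}{\partial t}(0,0)\neq 0.$$ Fix $\tau\in\mathbb{R}$ sufficiently close to $0$, and let $j_0^{\pm}=j_0^{\pm}(\tau)$ be real numbers with $\nu_1(j_0^{\pm},\tau)=0$, and assume $\nu_2(j_0^{\pm},\tau)\neq 0$. Then Hamiltonian flip bifurcations (with respect to $j$, at fixed $t=\tau$) of the singularity at the origin occur at $(j,t)=(j_0^{\pm},\tau)$. If $a\,\nu_2(j_0^{\pm},\tau)<0$ the bifurcation is dual, and if $a\,\nu_2(j_0^{\pm},\tau)>0$ it is not dual.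
   Context: A singular point $x$ is stable (in the sense of Lyapunov) if all points in a sufficiently small neighbourhood of $x$ remain close to $x$ under the flow for all time; otherwise it is unstable. It is a centre if all eigenvalues of the linearised system are non-zero and purely imaginary, and a saddle if the linearisation has no purely imaginary eigenvalues ($0$ counted as purely imaginary). The systems are considered modulo the $\mathbb{Z}_2$-action $(q,p)\mapsto(-q,-p)$ (equivalently on the reduced phase space, the cone $\{(u,v,w): 4uv=w^2,\ u,v\ge0\}$ with $u=q^2/2$, $v=p^2/2$, $w=qp$, whose apex corresponds to the origin). Hamiltonian flip bifurcation (for a family depending on a parameter $j$, with the origin a singular point): if the origin is stable and becomes unstable as $j$ passes through $j_0$, while at the same time an additional singularity which is a centre is produced, the origin undergoes a Hamiltonian flip bifurcation at $j=j_0$. If the origin is unstable and becomes stable as $j$ passes through $j_0$, while at the same time an additional singularity which is a saddle is produced, it undergoes a dual Hamiltonian flip bifurcation at $j=j_0$. *)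

(* Defs.v *)
From Stdlib Require Import Reals List.
From Coquelicot Require Import Coquelicot.
Open Scope R_scope.

Definition partial (d : bool) (f : R -> R -> R) : R -> R -> R :=
  if d then (fun x y => Derive (fun y' => f x y') y)
  else (fun x y => Derive (fun x' => f x' y) x).

Definition iter_partial (ds : list bool) (f : R -> R -> R) : R -> R -> R :=
  fold_right partial f ds.

Definition smooth2 (f : R -> R -> R) : Prop :=
  forall (ds : list bool) (x y : R),
    ex_derive (fun x' => iter_partial ds f x' y) x /\
    ex_derive (fun y' => iter_partial ds f x y') y /\
    continuous (fun z : R * R => iter_partial ds f (fst z) (snd z)) (x, y).

Definition XHq (H : R -> R -> R) (q p : R) : R := Derive (fun p' => H q p') p.
Definition XHp (H : R -> R -> R) (q p : R) : R := - Derive (fun q' => H q' p) q.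

Definition singular_point (H : R -> R -> R) (q0 p0 : R) : Prop :=
  XHq H q0 p0 = 0 /\ XHp H q0 p0 = 0.

Definition is_solution (H : R -> R -> R) (T : R) (q p : R -> R) : Prop :=
  forall t, 0 <= t <= T ->
    is_derive q t (XHq H (q t) (p t)) /\ is_derive p t (XHp H (q t) (p t)).

Definition dist2 (q1 p1 q2 p2 : R) : R := sqrt ((q1 - q2) ^ 2 + (p1 - p2) ^ 2).

Definition lyap_stable (H : R -> R -> R) (q0 p0 : R) : Prop :=
  forall eps, 0 < eps -> exists delta, 0 < delta /\
    forall (T : R) (q p : R -> R), 0 <= T -> is_solution H T q p ->
      dist2 (q 0) (p 0) q0 p0 < delta ->
      forall t, 0 <= t <= T -> dist2 (q t) (p t) q0 p0 < eps.

Definition J11 H q0 p0 := Derive (fun q' => XHq H q' p0) q0.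
Definition J12 H q0 p0 := Derive (fun p' => XHq H q0 p') p0.
Definition J21 H q0 p0 := Derive (fun q' => XHp H q' p0) q0.
Definition J22 H q0 p0 := Derive (fun p' => XHp H q0 p') p0.

Definition lin_eigenvalue (H : R -> R -> R) (q0 p0 : R) (l : C) : Prop :=
  exists v1 v2 : C, (v1 <> 0%C \/ v2 <> 0%C) /\
    (RtoC (J11 H q0 p0) * v1 + RtoC (J12 H q0 p0) * v2 = l * v1)%C /\
    (RtoC (J21 H q0 p0) * v1 + RtoC (J22 H q0 p0) * v2 = l * v2)%C.

Definition purely_imaginary (l : C) : Prop := Re l = 0.

Definition is_centre (H : R -> R -> R) (q0 p0 : R) : Prop :=
  forall l, lin_eigenvalue H q0 p0 l -> l <> 0%C /\ purely_imaginary l.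

Definition is_saddle (H : R -> R -> R) (q0 p0 : R) : Prop :=
  forall l, lin_eigenvalue H q0 p0 l -> ~ purely_imaginary l.

(* Hf j is the Hamiltonian at parameter j.  [kind] is is_centre (flip) or
   is_saddle (dual flip); [before]/[after] say whether the origin is stable
   before/after passing j0 in the direction s. *)
Definition flip_type (stable_before : bool)
    (kind : (R -> R -> R) -> R -> R -> Prop)
    (Hf : R -> R -> R -> R) (j0 : R) : Prop :=
  exists s : R, (s = 1 \/ s = -1) /\
  exists eta rho : R, 0 < eta /\ 0 < rho /\
    (forall j, - eta < s * (j - j0) < 0 ->
       (if stable_before then lyap_stable (Hf j) 0 0
        else ~ lyap_stable (Hf j) 0 0) /\
       forall q p, dist2 q p 0 0 < rho -> singular_point (Hf j) q p ->
         q = 0 /\ p = 0) /\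
    (forall j, 0 < s * (j - j0) < eta ->
       if stable_before then ~ lyap_stable (Hf j) 0 0
       else lyap_stable (Hf j) 0 0) /\
    (forall eps, 0 < eps -> exists delta, 0 < delta /\
       forall j, 0 < s * (j - j0) < delta ->
         exists q p, ~ (q = 0 /\ p = 0) /\ dist2 q p 0 0 < eps /\
           singular_point (Hf j) q p /\ kind (Hf j) q p).

Definition hamiltonian_flip (Hf : R -> R -> R -> R) (j0 : R) : Prop :=
  flip_type true is_centre Hf j0.

Definition dual_hamiltonian_flip (Hf : R -> R -> R -> R) (j0 : R) : Prop :=
  flip_type false is_saddle Hf j0.

Definition Hfam (a b : R) (nu1 nu2 : R -> R -> R) (tau : R) (j q p : R) : R :=
  a / 2 * p ^ 2 + b / 6 * q ^ 6 + nu1 j tau / 2 * q ^ 2 + nu2 j tau / 4 * q ^ 4.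

(* Main.v *)
Require Import Defs.
From Stdlib Require Import Reals.
From Coquelicot Require Import Coquelicot.
From Stdlib Require Import Lra Psatz Ranalysis5 ClassicalEpsilon.
Open Scope R_scope.


Definition HH (a b A B : R) (q p : R) : R :=
  a / 2 * p ^ 2 + b / 6 * q ^ 6 + A / 2 * q ^ 2 + B / 4 * q ^ 4.

Lemma XHq_HH a b A B q p : XHq (HH a b A B) q p = a * p.
Proof. unfold XHq, HH. apply is_derive_unique. auto_derive; [trivial| field]. Qed.

Lemma XHp_HH a b A B q p : XHp (HH a b A B) q p = - (b*q^5 + A*q + B*q^3).
Proof. unfold XHp, HH. f_equal. apply is_derive_unique. auto_derive; [trivial| field]. Qed.

Lemma J11_HH a b A B q p : J11 (HH a b A B) q p = 0.
Proof. unfold J11. rewrite (Derive_ext _ (fun _ => a * p)).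
  apply is_derive_unique; auto_derive; [trivial|field]. intros; apply XHq_HH. Qed.
Lemma J12_HH a b A B q p : J12 (HH a b A B) q p = a.
Proof. unfold J12. rewrite (Derive_ext _ (fun p' => a * p')).
  apply is_derive_unique; auto_derive; [trivial|field]. intros; apply XHq_HH. Qed.
Lemma J21_HH a b A B q p : J21 (HH a b A B) q p = - (5*b*q^4 + A + 3*B*q^2).
Proof. unfold J21. rewrite (Derive_ext _ (fun q' => - (b*q'^5 + A*q' + B*q'^3))).
  apply is_derive_unique; auto_derive; [trivial|field]. intros; apply XHp_HH. Qed.
Lemma J22_HH a b A B q p : J22 (HH a b A B) q p = 0.
Proof. unfold J22. rewrite (Derive_ext _ (fun _ => - (b*q^5 + A*q + B*q^3))).
  apply is_derive_unique; auto_derive; [trivial|field]. intros; apply XHp_HH. Qed.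


Lemma sq_neg (l : C) r : (l * l = RtoC r)%C -> r < 0 -> l <> 0%C /\ Re l = 0.
Proof. destruct l as [x y]. unfold Cmult, RtoC. simpl. intros E Hr. injection E. intros E2 E1.
  split. intro Z. injection Z. intros; subst. lra.
  destruct (Req_dec x 0) as [|Hx]; auto. assert (y = 0) by nra. subst. nra. Qed.
Lemma sq_pos (l : C) r : (l * l = RtoC r)%C -> 0 < r -> Re l <> 0.
Proof. destruct l as [x y]. unfold Cmult, RtoC. simpl. intros E Hr. injection E. intros E2 E1.
  intro; subst. nra. Qed.

Lemma csq a k (l v1 v2 : C) : a <> 0 -> (v1 <> 0%C \/ v2 <> 0%C) ->
  (RtoC 0 * v1 + RtoC a * v2 = l * v1)%C ->
  (RtoC k * v1 + RtoC 0 * v2 = l * v2)%C -> (l * l = RtoC (a * k))%C.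
Proof.
intros Ha Hv E1 E2.
destruct (Ceq_dec v1 0) as [Z|Hv1].
{ exfalso. subst v1. destruct Hv as [Hv|Hv]; [now apply Hv|].
  apply Hv. replace v2 with (/ RtoC a * (RtoC a * v2))%C.
  replace (RtoC a * v2)%C with (l * 0)%C. ring. rewrite <- E1. ring.
  field. intro H. apply Ha. injection H. auto. }
assert (E: ((l*l - RtoC (a*k)) * v1 = 0)%C).
{ rewrite RtoC_mult. replace ((l * l - RtoC a * RtoC k) * v1)%C with (l * (l*v1) - RtoC a * (RtoC k * v1))%C by ring.
  rewrite <- E1. replace (RtoC k * v1)%C with (l*v2)%C. ring. rewrite <- E2. ring. }
assert (E': (l*l - RtoC (a*k) = 0)%C).
{ replace (l*l - RtoC (a*k))%C with ((l*l - RtoC (a*k)) * v1 * / v1)%C by (field; auto).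
  rewrite E. ring. }
replace (l*l)%C with ((l*l - RtoC (a*k)) + RtoC (a*k))%C by ring. rewrite E'. ring.
Qed.

Lemma eig_sq a b A B q p l : a <> 0 -> lin_eigenvalue (HH a b A B) q p l ->
  (l * l = RtoC (a * J21 (HH a b A B) q p))%C.
Proof.
  intros Ha [v1 [v2 [Hv [E1 E2]]]].
  rewrite J11_HH, J12_HH in E1. rewrite J22_HH in E2.
  eapply csq; eauto.
Qed.

Lemma kind_centre a b A B q : a <> 0 -> q <> 0 -> b*q^4 + B*q^2 + A = 0 ->
  a*(2*b*q^2+B) > 0 -> is_centre (HH a b A B) q 0.
Proof.
  intros Ha Hq E S l Hl. apply (sq_neg l (a * J21 (HH a b A B) q 0)).
  now apply eig_sq. rewrite J21_HH.
  replace (a * - (5 * b * q ^ 4 + A + 3 * B * q ^ 2)) with (- (2*q^2) * (a*(2*b*q^2+B))).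
  assert (0 < q^2) by (apply pow2_gt_0 ; auto). nra.
  replace A with (- (b*q^4 + B*q^2)) by lra. ring.
Qed.

Lemma kind_saddle a b A B q : a <> 0 -> q <> 0 -> b*q^4 + B*q^2 + A = 0 ->
  - (a*(2*b*q^2+B)) > 0 -> is_saddle (HH a b A B) q 0.
Proof.
  intros Ha Hq E S l Hl. apply (sq_pos l (a * J21 (HH a b A B) q 0)).
  now apply eig_sq. rewrite J21_HH.
  replace (a * - (5 * b * q ^ 4 + A + 3 * B * q ^ 2)) with (- (2*q^2) * (a*(2*b*q^2+B))).
  assert (0 < q^2) by (apply pow2_gt_0 ; auto). nra.
  replace A with (- (b*q^4 + B*q^2)) by lra. ring.
Qed.

Lemma sing_HH a b A B q p : a <> 0 -> singular_point (HH a b A B) q p <->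
  p = 0 /\ q * (b*q^4 + B*q^2 + A) = 0.
Proof.
  intros Ha. unfold singular_point. rewrite XHq_HH, XHp_HH. split.
  - intros [E1 E2]. split. apply Rmult_eq_reg_l with a; lra. 
    replace (q * (b*q^4 + B*q^2 + A)) with (- - (b * q ^ 5 + A * q + B * q ^ 3)) by ring. lra.
  - intros [E1 E2]. subst. split. ring.
    replace (b * q ^ 5 + A * q + B * q ^ 3) with (q * (b*q^4 + B*q^2 + A)) by ring. lra.
Qed.


Lemma deriv_cont f x l : is_derive f x l -> continuity_pt f x.
Proof. intros H. apply continuity_pt_filterlim. apply (ex_derive_continuous f x). eexists; eauto. Qed.

Lemma sol_deriv a b A B T q p t : is_solution (HH a b A B) T q p -> 0 <= t <= T ->
  is_derive q t (a * p t) /\ is_derive p t (-(b*q t^5 + A*q t + B*q t^3)).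
Proof. intros Hs Ht. destruct (Hs t Ht) as [H1 H2]. rewrite XHq_HH in H1. rewrite XHp_HH in H2. auto. Qed.

Lemma W_deriv a b A B q p t : is_derive q t (a * p t) -> is_derive p t (-(b*q t^5 + A*q t + B*q t^3)) ->
  is_derive (fun s => HH a b A B (q s) (p s)) t 0.
Proof.
  intros Hq Hp. unfold HH.
  assert (Dq: Derive (fun x => q x) t = a*p t) by (apply is_derive_unique; auto).
  assert (Dp: Derive (fun x => p x) t = (-(b*q t^5 + A*q t + B*q t^3))) by (apply is_derive_unique; auto).
  auto_derive. repeat split; eexists; eauto.
  rewrite Dq, Dp. field.
Qed.

Lemma rho_deriv q p t lq lp : is_derive q t lq -> is_derive p t lp ->
  is_derive (fun s => q s ^ 2 + p s ^ 2) t (2 * q t * lq + 2 * p t * lp).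
Proof.
  intros Hq Hp.
  assert (Dq: Derive (fun x => q x) t = lq) by (apply is_derive_unique; auto).
  assert (Dp: Derive (fun x => p x) t = lp) by (apply is_derive_unique; auto).
  auto_derive. repeat split; eexists; eauto.
  rewrite Dq, Dp. ring.
Qed.


Lemma lower_HH a b A B x y : a*A > 0 ->
  x^2 <= Rmin 1 (a*A/(Rabs(a*B)+Rabs(a*b)+1)) ->
  a * HH a b A B x y >= Rmin (a*a) (a*A) / 4 * (x^2+y^2).
Proof.
  intros HA Hx. set (S := Rabs(a*B)+Rabs(a*b)) in *.
  assert (HS: 0 <= S) by (unfold S; pose proof (Rabs_pos (a*B)); pose proof (Rabs_pos (a*b)); lra).
  set (X := x^2) in *. assert (HX0: 0 <= X) by (unfold X; nra).
  assert (HX1: X <= 1) by (pose proof (Rmin_l 1 (a*A/(S+1))); lra).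
  assert (HX2: X <= a*A/(S+1)) by (pose proof (Rmin_r 1 (a*A/(S+1))); lra).
  assert (HXS: S * X <= a*A) by (apply Rmult_le_reg_r with (/(S+1)); [apply Rinv_0_lt_compat; lra|];
     assert (S/(S+1) <= 1) by (apply Rmult_le_reg_r with (S+1); [lra|]; field_simplify; lra);
     replace (a*A*/(S+1)) with (a*A/(S+1)) by reflexivity; nra).
  assert (E1: a*B*X^2 >= - Rabs(a*B) * X^2) by (pose proof (Rle_abs (-(a*B))); rewrite Rabs_Ropp in *; nra).
  assert (E2: a*b*X^3 >= - Rabs(a*b) * X^3) by (pose proof (Rle_abs (-(a*b))); rewrite Rabs_Ropp in *;
      assert (0 <= X^3) by (apply pow_le; lra); nra).
  assert (X^2 <= X) by nra. assert (X^3 <= X) by nra.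
  assert (E3: a*B*X^2 + a*b*X^3 >= - S * X).
  { unfold S. pose proof (Rabs_pos (a*B)); pose proof (Rabs_pos (a*b)). nra. }
  assert (Hm1: Rmin (a*a) (a*A) <= a*a) by apply Rmin_l.
  assert (Hm2: Rmin (a*a) (a*A) <= a*A) by apply Rmin_r.
  unfold HH. replace (x^6) with (X^3) by (unfold X; ring). replace (x^4) with (X^2) by (unfold X; ring).
  fold X. assert (0 <= y^2) by nra.
  assert (E4: a*B*X^2/4 + a*b*X^3/6 >= - S*X*X/4).
  { unfold S in *. pose proof (Rabs_pos (a*B)); pose proof (Rabs_pos (a*b)).
    assert (X^3 <= X^2) by nra.
    assert (Rabs (a*b) * X^3 <= Rabs (a*b) * X^2) by nra. replace (X^2) with (X*X) in * by ring. nra. }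
  assert (S*X*X <= a*A*X) by nra.
  assert (Rmin (a*a) (a*A) * X <= a*A*X) by nra.
  assert (Rmin (a*a) (a*A) * y^2 <= a*a*y^2) by nra.
  replace (a * (a / 2 * y ^ 2 + b / 6 * X ^ 3 + A / 2 * X + B / 4 * X ^ 2)) with
    (a*a/2*y^2 + a*A/2*X + (a*B*X^2/4 + a*b*X^3/6)) by field. assert (0 <= a*a*y^2) by nra. clearbody X S. lra.
Qed.

Lemma upper_HH a b A B x y : a*A > 0 -> x^2 + y^2 <= 1 ->
  a * HH a b A B x y <= (a*a + a*A + Rabs(a*B) + Rabs(a*b)) * (x^2+y^2).
Proof.
  intros HA H. set (X := x^2). assert (0 <= X) by (unfold X; nra). assert (0 <= y^2) by nra.
  assert (X <= 1) by (unfold X in *; lra).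
  assert (X^2 <= X) by nra.
  assert (E1: a*B*X^2 <= Rabs(a*B) * X) by (pose proof (Rle_abs (a*B)); pose proof (Rabs_pos (a*B)); nra).
  assert (E2: a*b*X^3 <= Rabs(a*b) * X) by (pose proof (Rle_abs (a*b)); pose proof (Rabs_pos (a*b));
     assert (X^3 <= X) by nra; assert (0<=X^3) by (apply pow_le; lra); nra).
  unfold HH. replace (x^6) with (X^3) by (unfold X; ring). replace (x^4) with (X^2) by (unfold X; ring).
  fold X. pose proof (Rabs_pos (a*B)); pose proof (Rabs_pos (a*b)).
  assert (a*A*X <= a*A*(X+y^2)) by nra.
  assert (a*a*y^2 <= a*a*(X+y^2)) by nra.
  assert (Rabs(a*B)*X <= Rabs(a*B)*(X+y^2)) by nra.
  assert (Rabs(a*b)*X <= Rabs(a*b)*(X+y^2)) by nra.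
  replace (a * (a / 2 * y ^ 2 + b / 6 * X ^ 3 + A / 2 * X + B / 4 * X ^ 2)) with
    (a*a/2*y^2 + a*A/2*X + a*B*X^2/4 + a*b*X^3/6) by field. nra.
Qed.

Lemma const_on f T : 0 <= T -> (forall t, 0 <= t <= T -> is_derive f t 0) ->
  forall s, 0 <= s <= T -> f s = f 0.
Proof.
  intros HT Hd s Hs. destruct (Req_dec s 0) as [->|Hs0]; [reflexivity|].
  destruct (MVT_gen f 0 s (fun _ => 0)) as [c [Hc E]].
  - intros x Hx. rewrite Rmin_left, Rmax_right in Hx by lra. apply Hd. lra.
  - intros x Hx. rewrite Rmin_left, Rmax_right in Hx by lra. apply (deriv_cont f x 0). apply Hd. lra.
  - lra.
Qed.

Lemma Wconst a b A B T q p : 0 <= T -> is_solution (HH a b A B) T q p ->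
  forall s, 0 <= s <= T -> HH a b A B (q s) (p s) = HH a b A B (q 0) (p 0).
Proof.
  intros HT Hs. apply (const_on (fun s => HH a b A B (q s) (p s)) T HT).
  intros t Ht. destruct (sol_deriv a b A B T q p t Hs Ht). now apply W_deriv.
Qed.

Lemma stab a b A B : a*A > 0 -> lyap_stable (HH a b A B) 0 0.
Proof.
  intros HA eps Heps.
  set (m := Rmin (a*a) (a*A) / 4).
  set (r0 := Rmin 1 (a*A/(Rabs(a*B)+Rabs(a*b)+1))).
  set (C := a*a + a*A + Rabs(a*B) + Rabs(a*b)).
  assert (Hr0: 0 < r0). { unfold r0. apply Rmin_pos. lra. apply Rdiv_lt_0_compat. lra.
     pose proof (Rabs_pos (a*B)); pose proof (Rabs_pos (a*b)). lra. }
  assert (Hm: 0 < m). { unfold m. apply Rdiv_lt_0_compat; [|lra]. apply Rmin_pos; nra. }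
  assert (HC: 0 <= C). { unfold C. pose proof (Rabs_pos (a*B)); pose proof (Rabs_pos (a*b)). nra. }
  set (L := Rmin (eps*eps) r0 / 2).
  assert (HL: 0 < L). { unfold L. apply Rdiv_lt_0_compat; [|lra]. apply Rmin_pos; nra. }
  assert (HL1: L <= eps*eps /2) by (unfold L; pose proof (Rmin_l (eps*eps) r0); lra).
  assert (HL2: L <= r0 /2) by (unfold L; pose proof (Rmin_r (eps*eps) r0); lra).
  assert (Hr1: r0 <= 1) by apply Rmin_l.
  set (K := Rmin L (m*L/(C+1)) / 2).
  assert (HK: 0 < K). { unfold K. apply Rdiv_lt_0_compat; [|lra]. apply Rmin_pos; [lra|].
     apply Rdiv_lt_0_compat; nra. }
  assert (HK1: K <= L/2) by (unfold K; pose proof (Rmin_l L (m*L/(C+1))); lra).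
  assert (HK2: K * (C+1) <= m*L/2).
  { unfold K. pose proof (Rmin_r L (m*L/(C+1))).
    assert (Rmin L (m * L / (C + 1)) * (C+1) <= m*L). 
    { apply Rmult_le_reg_r with (/(C+1)). apply Rinv_0_lt_compat; lra.
      rewrite Rmult_assoc, Rinv_r by lra. lra. }
    lra. }
  exists (sqrt K). split. apply sqrt_lt_R0; lra.
  intros T q p HT Hs H0 t Ht.
  unfold dist2 in *. rewrite !Rminus_0_r in *.
  set (rho := fun s => q s ^ 2 + p s ^ 2).
  assert (Hrho0: rho 0 < K).
  { unfold rho. apply sqrt_lt_0_alt. exact H0. }
  assert (Hrho0': 0 <= rho 0) by (unfold rho; nra).
  assert (HW0: a * HH a b A B (q 0) (p 0) < m * L).
  { pose proof (upper_HH a b A B (q 0) (p 0) HA).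
    fold C in H. assert (rho 0 <= 1) by lra. specialize (H H1).
    fold (rho 0) in H. nra. }
  assert (Hall: forall s, 0 <= s <= T -> rho s < L).
  { intros s Hs0. destruct (Rlt_le_dec (rho s) L) as [|Hge]; [assumption|exfalso].
    assert (Hc: exists c, 0 <= c <= s /\ rho c = L).
    { destruct (Req_dec (rho s) L) as [E|NE]. exists s. split; [lra|auto].
      assert (s <> 0) by (intro; subst; lra).
      destruct (IVT_interv (fun u => rho u - L) 0 s) as [c [Hc1 Hc2]].
      - intros u Hu. apply continuity_pt_minus; [|apply continuity_pt_const; intros ??; reflexivity].
        destruct (sol_deriv a b A B T q p u Hs ltac:(lra)) as [D1 D2].
        apply (deriv_cont _ _ _ (rho_deriv q p u _ _ D1 D2)).
      - lra.
      - lra.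
      - lra.
      - exists c. split; auto. lra. }
    destruct Hc as [c [Hc1 Hc2]].
    pose proof (Wconst a b A B T q p HT Hs c ltac:(lra)) as Wc.
    assert (q c ^ 2 <= r0) by (unfold rho in Hc2; nra).
    pose proof (lower_HH a b A B (q c) (p c) HA H) as Lw. fold m in Lw.
    rewrite Wc in Lw. fold (rho c) in Lw. rewrite Hc2 in Lw. lra. }
  specialize (Hall t Ht). fold (rho t).
  apply Rlt_le_trans with (sqrt L). apply sqrt_lt_1; unfold rho in *; nra.
  rewrite <- (sqrt_Rsqr eps) by lra. apply sqrt_le_1; unfold Rsqr; nra.
Qed.


Lemma ball_R (x e y : R) : ball x e y <-> Rabs (y - x) < e.
Proof. reflexivity. Qed.

Lemma ode_inv (f : R -> R) (u v x0 x1 : R) : u < x0 -> x0 < x1 -> x1 < v ->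
  (forall x, u < x < v -> 0 < f x /\ continuous f x) ->
  exists T (y : R -> R), 0 < T /\ y 0 = x0 /\ y T = x1 /\
    forall t, 0 <= t <= T -> u < y t < v /\ is_derive y t (f (y t)).
Proof.
  intros H0 H1 H2 Hf.
  set (h := fun x => / f x).
  assert (Hh: forall x, u < x < v -> 0 < h x /\ continuous h x).
  { intros x Hx. destruct (Hf x Hx) as [P C]. split. unfold h. apply Rinv_0_lt_compat; auto.
    apply continuous_Rinv_comp; auto. lra. }
  set (F := fun x => RInt h x0 x).
  assert (HF: forall x, u < x < v -> is_derive F x (h x)).
  { intros x Hx. apply (is_derive_RInt h F x0 x); [|apply Hh; auto].
    assert (He: 0 < Rmin (x - u) (v - x)) by (apply Rmin_pos; lra).
    exists (mkposreal _ He). intros b Hb. rewrite ball_R in Hb. change (Rabs (b - x) < Rmin (x - u) (v - x)) in Hb.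
    pose proof (Rmin_l (x-u) (v-x)). pose proof (Rmin_r (x-u) (v-x)).
    assert (u < b < v) by (apply Rabs_def2 in Hb; lra).
    unfold F. apply (RInt_correct h x0 b). apply ex_RInt_continuous. intros z Hz. apply Hh.
    split. apply Rlt_le_trans with (Rmin x0 b); [apply Rmin_glb_lt; lra | lra].
    apply Rle_lt_trans with (Rmax x0 b); [lra | apply Rmax_lub_lt; lra]. }
  assert (Hinc: forall x y, u < x -> x < y -> y < v -> F x < F y).
  { intros x y Hx Hxy Hy. destruct (MVT_gen F x y h) as [c [Hc E]].
    - intros z Hz. rewrite Rmin_left, Rmax_right in Hz by lra. apply HF. lra.
    - intros z Hz. rewrite Rmin_left, Rmax_right in Hz by lra. apply (deriv_cont F z (h z)). apply HF. lra.
    - rewrite Rmin_left, Rmax_right in Hc by lra. assert (0 < h c) by (apply Hh; lra). nra. }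
  set (u' := (u + x0)/2). set (v' := (x1 + v)/2).
  assert (Hcont: forall a, u' <= a <= v' -> continuity_pt F a).
  { intros a Ha. apply (deriv_cont F a (h a)). apply HF. unfold u', v' in *. lra. }
  set (G := fun t => epsilon (inhabits 0) (fun x => u' <= x <= v' /\ F x = t)).
  assert (HG: forall t, F u' <= t <= F v' -> u' <= G t <= v' /\ F (G t) = t).
  { intros t Ht. unfold G. apply epsilon_spec.
    destruct (f_interv_is_interv F u' v' t) as [x Hx]; [unfold u', v'; lra|auto|auto|].
    exists x; auto. }
  assert (Hinj: forall x y, u' <= x <= v' -> u' <= y <= v' -> F x = F y -> x = y).
  { intros x y Hx Hy E. destruct (Rtotal_order x y) as [L|[L|L]]; auto.
    - pose proof (Hinc x y ltac:(unfold u' in *; lra) L ltac:(unfold v' in *; lra)). lra.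
    - pose proof (Hinc y x ltac:(unfold u' in *; lra) L ltac:(unfold v' in *; lra)). lra. }
  assert (HGF: forall x, u' <= x <= v' -> G (F x) = x).
  { intros x Hx. assert (F u' <= F x <= F v').
    { split; destruct (Req_dec x u'); destruct (Req_dec x v'); subst; try lra;
      try (apply Rlt_le; apply Hinc; unfold u', v' in *; lra). }
    destruct (HG (F x) H) as [Ha Hb]. apply Hinj; auto. }
  assert (Hu'v': u' < v') by (unfold u', v'; lra).
  assert (Hincl: forall x y, u' <= x -> x < y -> y <= v' -> F x < F y).
  { intros. apply Hinc; unfold u', v' in *; lra. }
  assert (HFx0: F x0 = 0) by (unfold F; rewrite RInt_point; reflexivity).
  assert (Hlo: F u' < 0) by (rewrite <- HFx0; apply Hincl; unfold u', v' in *; lra).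
  assert (Hhi: F x1 < F v') by (apply Hincl; unfold u', v' in *; lra).
  assert (HT: 0 < F x1) by (rewrite <- HFx0; apply Hincl; unfold u', v' in *; lra).
  exists (F x1), G. split; [auto|]. split. rewrite <- HFx0. apply HGF; unfold u', v'; lra.
  split. apply HGF; unfold u', v'; lra.
  intros t Ht. assert (Htr: F u' < t < F v') by lra.
  destruct (HG t ltac:(lra)) as [HGt1 HGt2].
  split. unfold u', v' in *; lra.
  assert (HGlb: G (F u') = u') by (apply HGF; lra).
  assert (HGub: G (F v') = v') by (apply HGF; lra).
  assert (Prf: forall a, G (F u') <= a <= G (F v') -> derivable_pt F a).
  { intros a Ha. rewrite HGlb, HGub in Ha. exists (h a). apply is_derive_Reals. apply HF.
    unfold u', v' in *; lra. }
  assert (Prg: G (F u') <= G t <= G (F v')) by (rewrite HGlb, HGub; auto).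
  assert (Hc: continuity_pt G t).
  { apply (continuity_pt_recip_interv F G u' v'); auto.
    - intros x Hx1 Hx2. apply (HG x). lra.
    - intros x Hx1 Hx2. apply (HG x). lra. }
  pose proof (derivable_pt_lim_recip_interv F G (F u') (F v') t Prf Hc ltac:(lra) Htr Prg) as D.
  assert (Dv: derive_pt F (G t) (Prf (G t) Prg) = h (G t)).
  { apply derive_pt_eq_0. apply is_derive_Reals. apply HF. unfold u', v' in *; lra. }
  rewrite Dv in D.
  assert (Hpos: 0 < h (G t)) by (apply Hh; unfold u', v' in *; lra).
  apply is_derive_Reals. replace (f (G t)) with (1 / h (G t)). apply D.
  - intros x Hx. apply (HG x). lra.
  - lra.
  - unfold h. field. assert (0 < f (G t)) by (apply Hf; unfold u', v' in *; lra). lra.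
Qed.


Lemma gbounds k c4 c6 x : 0 < k -> x^2 <= Rmin 1 (k / (2 * (Rabs c4 + Rabs c6 + 1))) ->
  k * x^2 / 2 <= k*x^2 - c4*x^4 - c6*x^6 <= 3 * k * x^2 / 2.
Proof.
  intros Hk Hx. set (S := Rabs c4 + Rabs c6) in *.
  assert (HS: 0 <= S) by (unfold S; pose proof (Rabs_pos c4); pose proof (Rabs_pos c6); lra).
  set (X := x^2) in *. assert (HX0: 0 <= X) by (unfold X; nra).
  assert (HX1: X <= 1) by (pose proof (Rmin_l 1 (k/(2*(S+1)))); lra).
  assert (HX2: X <= k/(2*(S+1))) by (pose proof (Rmin_r 1 (k/(2*(S+1)))); lra).
  replace (x^4) with (X*X) by (unfold X; ring). replace (x^6) with (X*X*X) by (unfold X; ring).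
  assert (HSS : S = Rabs c4 + Rabs c6) by reflexivity.
  clearbody X S.
  assert (HXS: S * X <= k/2).
  { assert (X * (2*(S+1)) <= k).
    { apply Rmult_le_reg_r with (/(2*(S+1))). apply Rinv_0_lt_compat; lra.
      rewrite Rmult_assoc, Rinv_r by lra. unfold Rdiv in HX2. lra. }
    nra. }
  assert (E1: Rabs (c4*(X*X)) <= Rabs c4 * X * X) by (rewrite Rabs_mult, (Rabs_right (X*X)) by nra; lra).
  assert (E2: Rabs (c6*(X*X*X)) <= Rabs c6 * X * X) by (rewrite Rabs_mult, (Rabs_right (X*X*X)) by nra;
     pose proof (Rabs_pos c6); assert (X*X*X <= X*X) by nra; nra).
  assert (S * X * X <= k/2 * X) by nra.
  pose proof (Rle_abs (c4*(X*X))). pose proof (Rle_abs (-(c4*(X*X)))). rewrite Rabs_Ropp in *.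
  pose proof (Rle_abs (c6*(X*X*X))). pose proof (Rle_abs (-(c6*(X*X*X)))). rewrite Rabs_Ropp in *.
  split; nra.
Qed.

Lemma p_deriv (sg a b A B : R) (y : R -> R) t :
  (sg = 1 \/ sg = -1) -> 0 < sg * a ->
  0 < (-A/a)*y t^2 - B/(2*a)*y t^4 - b/(3*a)*y t^6 ->
  is_derive y t (sg * a * sqrt ((-A/a)*y t^2 - B/(2*a)*y t^4 - b/(3*a)*y t^6)) ->
  is_derive (fun s => sg * sqrt ((-A/a)*y s^2 - B/(2*a)*y s^4 - b/(3*a)*y s^6)) t
     (-(b*y t^5 + A*y t + B*y t^3)).
Proof.
  intros Hsg Ha Hg Hy.
  assert (Dy: Derive (fun x => y x) t = sg * a * sqrt ((-A/a)*y t^2 - B/(2*a)*y t^4 - b/(3*a)*y t^6))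
    by (apply is_derive_unique; auto).
  assert (a <> 0) by (destruct Hsg; subst; lra).
  auto_derive. { repeat split; try (eexists; eauto). simpl. replace (- A / a * (y t * (y t * 1)) + - (B / (2 * a) * (y t * (y t * (y t * (y t * 1))))) + - (b / (3 * a) * (y t * (y t * (y t * (y t * (y t * (y t * 1)))))))) with (- A / a * y t ^ 2 - B / (2 * a) * y t ^ 4 - b / (3 * a) * y t ^ 6) by ring. auto. }
  rewrite Dy. set (G := (-A/a)*y t^2 - B/(2*a)*y t^4 - b/(3*a)*y t^6) in *.
  assert (HS: sqrt G <> 0) by (apply Rgt_not_eq; apply sqrt_lt_R0; auto).
  replace (- A / a * (y t * (y t * 1)) + - (B / (2 * a) * (y t * (y t * (y t * (y t * 1))))) + - (b / (3 * a) * (y t * (y t * (y t * (y t * (y t * (y t * 1)))))))) with G by (unfold G; ring). clearbody G. destruct Hsg; subst sg; field; auto.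
Qed.

Lemma unstab a b A B : a <> 0 -> a*A < 0 -> ~ lyap_stable (HH a b A B) 0 0.
Proof.
  intros Ha HA Hst.
  set (gf := fun x => (-A/a)*x^2 - B/(2*a)*x^4 - b/(3*a)*x^6).
  assert (Hk: 0 < -A/a).
  { replace (-A/a) with (-(a*A)/(a*a)) by (field; auto). apply Rdiv_lt_0_compat. lra.
    destruct (Rlt_dec 0 a); nra. }
  set (r0 := Rmin 1 ((-A/a) / (2 * (Rabs (B/(2*a)) + Rabs (b/(3*a)) + 1)))).
  assert (Hr0: 0 < r0). { unfold r0. apply Rmin_pos. lra. apply Rdiv_lt_0_compat. auto.
     pose proof (Rabs_pos (B/(2*a))); pose proof (Rabs_pos (b/(3*a))). lra. }
  assert (Hgb: forall x, x^2 <= r0 -> (-A/a)*x^2/2 <= gf x <= 3*(-A/a)*x^2/2).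
  { intros x Hx. unfold gf. apply gbounds; auto. }
  set (rho := sqrt r0).
  assert (Hrho: 0 < rho) by (apply sqrt_lt_R0; auto).
  assert (Hrho2: rho * rho = r0) by (apply sqrt_sqrt; lra).
  assert (Hin: forall x, 0 < x < rho -> 0 < gf x).
  { intros x Hx. assert (x^2 <= r0) by nra. specialize (Hgb x H).
    assert (0 < x^2) by nra. nra. }
  set (sg := if Rlt_dec 0 a then 1 else -1).
  assert (Hsg: sg = 1 \/ sg = -1) by (unfold sg; destruct (Rlt_dec 0 a); auto).
  assert (Hsga: 0 < sg * a) by (unfold sg; destruct (Rlt_dec 0 a); lra).
  destruct (Hst (rho/2) ltac:(lra)) as [delta [Hd Hsol]].
  set (k := -A/a) in *.
  set (q0 := Rmin (rho/4) (delta/(2*(1+2*k)))).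
  assert (Hq0: 0 < q0) by (unfold q0; apply Rmin_pos; [lra| apply Rdiv_lt_0_compat; lra]).
  assert (Hq0a: q0 <= rho/4) by apply Rmin_l.
  assert (Hq0b: q0 <= delta/(2*(1+2*k))) by apply Rmin_r.
  set (f := fun x => sg * a * sqrt (gf x)).
  destruct (ode_inv f 0 rho q0 (rho/2)) as [T [y [HT [Hy0 [HyT Hy]]]]]; try lra.
  { intros x Hx. split. unfold f. apply Rmult_lt_0_compat; auto. apply sqrt_lt_R0. auto.
    apply (ex_derive_continuous f x). unfold f, gf. auto_derive.
    pose proof (Hin x Hx) as G. unfold gf in G.
    replace (k * (x * (x * 1)) + - (B / (2 * a) * (x * (x * (x * (x * 1))))) +
      - (b / (3 * a) * (x * (x * (x * (x * (x * (x * 1))))))))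
      with (k * x ^ 2 - B / (2 * a) * x ^ 4 - b / (3 * a) * x ^ 6) by ring. auto. }
  specialize (Hsol T y (fun t => sg * sqrt (gf (y t))) ltac:(lra)).
  assert (Hs: is_solution (HH a b A B) T y (fun t => sg * sqrt (gf (y t)))).
  { intros t Ht. destruct (Hy t Ht) as [Hyt Dy]. rewrite XHq_HH, XHp_HH. split.
    - unfold f in Dy. replace (a * (sg * sqrt (gf (y t)))) with (sg * a * sqrt (gf (y t))) by ring. auto.
    - unfold gf. apply p_deriv; auto. apply Hin; auto. }
  specialize (Hsol Hs).
  assert (Hsq: forall x, 0 <= gf x -> (sg * sqrt (gf x))^2 = gf x).
  { intros x Hx. replace ((sg * sqrt (gf x))^2) with ((sg*sg) * (sqrt (gf x) * sqrt (gf x))) by ring.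
    rewrite sqrt_sqrt by auto. destruct Hsg as [E|E]; rewrite E; ring. }
  assert (H0: dist2 (y 0) (sg * sqrt (gf (y 0))) 0 0 < delta).
  { unfold dist2. rewrite !Rminus_0_r. rewrite Hy0. rewrite Hsq by (apply Rlt_le, Hin; lra).
    assert (q0^2 <= r0) by nra. destruct (Hgb q0 H) as [Lo U].
    assert (q0 * (2*(1+2*k)) <= delta).
    { apply Rmult_le_reg_r with (/(2*(1+2*k))). apply Rinv_0_lt_compat; lra.
      rewrite Rmult_assoc, Rinv_r by lra. unfold Rdiv in Hq0b. lra. }
    assert (0 <= k * q0^2) by nra.
    assert (2*q0 <= delta) by nra.
    assert ((1+2*k) * q0^2 <= q0 * delta / 2) by nra.
    assert (q0 * delta / 2 <= delta * delta / 4) by nra.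
    rewrite <- (sqrt_Rsqr delta) by lra. apply sqrt_lt_1. nra. unfold Rsqr; nra.
    unfold Rsqr. nra. }
  specialize (Hsol H0 T ltac:(lra)).
  unfold dist2 in Hsol. rewrite !Rminus_0_r in Hsol. rewrite HyT in Hsol.
  assert (rho/2 <= sqrt ((rho/2)^2 + (sg * sqrt (gf (rho/2)))^2)).
  { rewrite <- (sqrt_Rsqr (rho/2)) at 1 by lra. apply sqrt_le_1. unfold Rsqr; nra. nra.
    unfold Rsqr. nra. }
  lra.
Qed.


Lemma abs_near x y : y <> 0 -> Rabs (x - y) < Rabs y / 2 ->
  0 < x*y /\ Rabs y / 2 <= Rabs x <= 3 * Rabs y / 2.
Proof.
  intros Hy H. unfold Rabs in *. destruct (Rcase_abs (x - y)); destruct (Rcase_abs y);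
  destruct (Rcase_abs x); split; try split; nra.
Qed.

Lemma pos_of_mul x c y : 0 < c -> x * c = y -> 0 < y -> 0 < x.
Proof. intros Hc E Hy. subst. destruct (Rlt_le_dec 0 x); auto. nra. Qed.

Lemma deriv_sign (n1 : R -> R) (j0 D : R) : is_derive n1 j0 D -> D <> 0 -> n1 j0 = 0 ->
  exists eta, 0 < eta /\ forall j, j <> j0 -> Rabs (j - j0) < eta ->
    0 < n1 j * D * (j - j0) /\ Rabs (n1 j) <= 3 * Rabs D / 2 * Rabs (j - j0).
Proof.
  intros Hd HD H0. apply is_derive_Reals in Hd.
  assert (He: 0 < Rabs D / 2) by (pose proof (Rabs_pos_lt D HD); lra).
  destruct (Hd _ He) as [del Hdel]. exists del. split; [apply cond_pos|].
  intros j Hj Hjj. set (h := j - j0). assert (Hh: h <> 0) by (unfold h; lra).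
  specialize (Hdel h Hh Hjj). replace (j0 + h) with j in Hdel by (unfold h; ring).
  rewrite H0, Rminus_0_r in Hdel.
  destruct (abs_near _ _ HD Hdel) as [S1 [S2 S3]].
  replace (n1 j) with (n1 j / h * h) by (field; auto).
  split. replace (n1 j / h * h * D * h) with ((n1 j / h * D) * (h*h)) by ring.
  apply Rmult_lt_0_compat; auto. nra.
  rewrite Rabs_mult. pose proof (Rabs_pos h). nra.
Qed.

Lemma cont_near (f : R -> R) (x : R) : continuous f x -> f x <> 0 ->
  exists eta, 0 < eta /\ forall y, Rabs (y - x) < eta -> Rabs (f y - f x) < Rabs (f x) / 2.
Proof.
  intros Hc Hf. assert (He: 0 < Rabs (f x) / 2) by (pose proof (Rabs_pos_lt _ Hf); lra).
  destruct (Hc (ball (f x) (mkposreal _ He)) (locally_ball _ _)) as [e He'].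
  exists e. split; [apply cond_pos|]. intros y Hy. apply (He' y Hy).
Qed.

Lemma dist2_sq q p r : 0 < r -> dist2 q p 0 0 < r -> q^2 + p^2 < r^2.
Proof.
  intros Hr H. unfold dist2 in H. rewrite !Rminus_0_r in H.
  rewrite <- (sqrt_Rsqr r) in H by lra. apply sqrt_lt_0_alt in H. unfold Rsqr in H. nra.
Qed.

Lemma poly_cont b B A : continuity (fun X => b*X^2 + B*X + A).
Proof. intros x. apply continuity_pt_filterlim. apply (ex_derive_continuous (fun X => b*X^2 + B*X + A)).
  auto_derive. trivial. Qed.


Lemma flip_gen (sb : bool) (kind : (R->R->R) -> R -> R -> Prop) (w a b : R) (n1 n2 : R -> R) (j0 D : R) :
  a <> 0 -> b <> 0 -> (w = 1 \/ w = -1) ->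
  (forall A B, w*a*A > 0 -> if sb then lyap_stable (HH a b A B) 0 0 else ~ lyap_stable (HH a b A B) 0 0) ->
  (forall A B, w*a*A < 0 -> if sb then ~ lyap_stable (HH a b A B) 0 0 else lyap_stable (HH a b A B) 0 0) ->
  (forall A B q, q <> 0 -> b*q^4 + B*q^2 + A = 0 -> w*(a*(2*b*q^2+B)) > 0 -> kind (HH a b A B) q 0) ->
  is_derive n1 j0 D -> D <> 0 -> n1 j0 = 0 -> continuous n2 j0 -> w*a*n2 j0 > 0 ->
  flip_type sb kind (fun j => HH a b (n1 j) (n2 j)) j0.
Proof.
  intros Ha Hb Hw Hbef Haft Hkind Hd HD H10 Hc2 Hn2.
  set (B0 := n2 j0) in *.
  assert (HB0: B0 <> 0) by (intro E; rewrite E in Hn2; lra).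
  destruct (deriv_sign n1 j0 D Hd HD H10) as [eta1 [He1 K1]].
  destruct (cont_near n2 j0 Hc2 HB0) as [eta2 [He2 K2]]. fold B0 in K2.
  set (eta := Rmin eta1 eta2).
  assert (Heta: 0 < eta) by (apply Rmin_pos; auto).
  assert (Hb0pos: 0 < Rabs B0) by (apply Rabs_pos_lt; auto).
  assert (Hbpos: 0 < Rabs b) by (apply Rabs_pos_lt; auto).
  assert (HDpos: 0 < Rabs D) by (apply Rabs_pos_lt; auto).
  assert (N2: forall j, Rabs (j - j0) < eta -> w*a*n2 j > 0 /\ Rabs B0 / 2 <= Rabs (n2 j)).
  { intros j Hj. assert (Rabs (j - j0) < eta2) by (pose proof (Rmin_r eta1 eta2); unfold eta in *; lra).
    destruct (abs_near (n2 j) B0 HB0 (K2 j H)) as [S1 [S2 S3]]. split; [|lra].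
    apply Rlt_gt. apply (pos_of_mul _ (B0*B0) ((w*a*B0)*(n2 j * B0))).
    apply Rsqr_pos_lt; auto. ring. apply Rmult_lt_0_compat; lra. }
  assert (N1: forall j, j <> j0 -> Rabs (j - j0) < eta ->
     0 < n1 j * D * (j - j0) /\ Rabs (n1 j) <= 3 * Rabs D / 2 * Rabs (j - j0)).
  { intros j Hj1 Hj2. apply K1; auto. pose proof (Rmin_l eta1 eta2); unfold eta in *; lra. }
  assert (Hwa0: w*a <> 0) by (apply Rmult_integral_contrapositive_currified; [destruct Hw; lra|auto]).
  assert (Hwa: w*a*D <> 0) by (apply Rmult_integral_contrapositive_currified; auto).
  set (s := if Rlt_dec 0 (w*a*D) then -1 else 1).
  assert (Hs: s = 1 \/ s = -1) by (unfold s; destruct (Rlt_dec 0 (w*a*D)); auto).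
  assert (Habs: forall j, Rabs (j - j0) = Rabs (s * (j - j0))).
  { intros j. unfold Rabs. destruct Hs as [E|E]; rewrite E; destruct (Rcase_abs (j - j0));
    destruct (Rcase_abs (_ * (j-j0))); lra. }
  assert (Sgn: forall j, j <> j0 -> Rabs (j - j0) < eta -> 0 < w*a*n1 j * (s*(j - j0)) -> False).
  { intros j Hj1 Hj2 P. destruct (N1 j Hj1 Hj2) as [Q _].
    assert (Hprod: (w*a*n1 j * (s*(j-j0))) * (n1 j * D * (j - j0)) = (w*a*D*s) * ((n1 j * (j - j0))*(n1 j * (j-j0))))
      by ring.
    assert (0 < (w*a*n1 j * (s*(j-j0))) * (n1 j * D * (j - j0))) by (apply Rmult_lt_0_compat; auto).
    assert (w*a*D*s < 0) by (unfold s; destruct (Rlt_dec 0 (w*a*D)); lra).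
    assert (0 <= (n1 j * (j - j0))*(n1 j * (j-j0))) by apply Rle_0_sqr.
    assert (0 <= (-(w*a*D*s)) * ((n1 j * (j - j0))*(n1 j * (j-j0)))) by (apply Rmult_le_pos; lra).
    lra. }
  assert (Bef: forall j, - eta < s * (j - j0) < 0 -> w*a*n1 j > 0).
  { intros j Hj. assert (Hj0: j <> j0) by (intro; subst; lra).
    assert (Hjr: Rabs (j - j0) < eta) by (rewrite Habs; unfold Rabs; destruct (Rcase_abs (s*(j-j0))); lra).
    destruct (Rtotal_order (w*a*n1 j) 0) as [L|[L|L]]; [| |lra].
    - exfalso. apply (Sgn j Hj0 Hjr). assert (0 < (- (w*a*n1 j)) * (-(s*(j-j0)))) by (apply Rmult_lt_0_compat; lra). lra.
    - exfalso. destruct (N1 j Hj0 Hjr) as [Q _].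
      assert (n1 j = 0) by (destruct (Rmult_integral _ _ L); [contradiction|auto]). rewrite H in Q. lra. }
  assert (Aft: forall j, 0 < s * (j - j0) < eta -> w*a*n1 j < 0).
  { intros j Hj. assert (Hj0: j <> j0) by (intro; subst; lra).
    assert (Hjr: Rabs (j - j0) < eta) by (rewrite Habs; unfold Rabs; destruct (Rcase_abs (s*(j-j0))); lra).
    destruct (Rtotal_order (w*a*n1 j) 0) as [L|[L|L]]; [lra| |].
    - exfalso. destruct (N1 j Hj0 Hjr) as [Q _].
      assert (n1 j = 0) by (destruct (Rmult_integral _ _ L); [contradiction|auto]). rewrite H in Q. lra.
    - exfalso. apply (Sgn j Hj0 Hjr). apply Rmult_lt_0_compat; lra. }
  exists s. split; [auto|].
  set (rho := Rmin 1 (Rabs B0 / (2 * Rabs b))).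
  assert (Hrho: 0 < rho) by (apply Rmin_pos; [lra| apply Rdiv_lt_0_compat; lra]).
  exists eta, rho. split; [auto|]. split; [auto|]. split; [|split].
  - intros j Hj. assert (Hjr: Rabs (j - j0) < eta) by (rewrite Habs; unfold Rabs; destruct (Rcase_abs (s*(j-j0))); lra).
    pose proof (Bef j Hj) as HA. destruct (N2 j Hjr) as [HB HBl].
    split. apply Hbef; auto.
    intros q p Hd2 Hsing. apply sing_HH in Hsing; auto. destruct Hsing as [Hp Hq]. subst p.
    split; auto. destruct (Req_dec q 0) as [|Hq0]; auto. exfalso.
    assert (E: b*q^4 + n2 j*q^2 + n1 j = 0).
    { apply Rmult_eq_reg_l with q; auto. rewrite Hq. ring. }
    pose proof (dist2_sq q 0 rho Hrho Hd2) as Hq2.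
    assert (Hr1: rho <= 1) by apply Rmin_l.
    assert (rho <= Rabs B0 / (2 * Rabs b)) by apply Rmin_r.
    assert (Hq2': q^2 * (2 * Rabs b) < Rabs B0).
    { assert (rho^2 <= rho) by (simpl; rewrite Rmult_1_r; pose proof (Rmult_le_compat_l rho rho 1 (Rlt_le _ _ Hrho) Hr1); lra).
      assert (q^2 < Rabs B0 / (2 * Rabs b)) by (replace (0^2) with 0 in Hq2 by ring; lra).
      apply Rmult_lt_compat_r with (r := 2 * Rabs b) in H1; [|lra].
      unfold Rdiv in H1. rewrite Rmult_assoc, Rinv_l in H1 by lra. lra. }
    assert (HAB: 0 < n1 j * n2 j).
    { apply (pos_of_mul _ ((w*a)*(w*a)) ((w*a*n1 j)*(w*a*n2 j))). apply Rsqr_pos_lt; auto. ring.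
      apply Rmult_lt_0_compat; lra. }
    assert (0 < q^2) by (apply pow2_gt_0; auto).
    assert (Hq4: 0 <= q^4) by (replace (q^4) with ((q^2)^2) by ring; apply pow2_ge_0).
    assert (Hn2p: 0 < Rabs (n2 j)) by lra.
    assert (Hbq: Rabs b * q^2 < Rabs (n2 j)) by lra.
    assert (Hbb: Rabs (b * n2 j * q^4) < n2 j * n2 j * q^2).
    { rewrite !Rabs_mult. rewrite (Rabs_right (q^4)) by lra.
      replace (n2 j * n2 j) with (Rabs (n2 j) * Rabs (n2 j)) by (rewrite <- Rabs_mult; apply Rabs_right; apply Rle_ge, Rle_0_sqr).
      replace (q^4) with (q^2*q^2) by ring.
      assert (Rabs b * q^2 * (Rabs (n2 j) * q^2) < Rabs (n2 j) * (Rabs (n2 j) * q^2)) by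
        (apply Rmult_lt_compat_r; [apply Rmult_lt_0_compat; lra|lra]).
      replace (Rabs b * Rabs (n2 j) * (q ^ 2 * q ^ 2)) with (Rabs b * q^2 * (Rabs (n2 j) * q^2)) by ring.
      replace (Rabs (n2 j) * Rabs (n2 j) * q ^ 2) with (Rabs (n2 j) * (Rabs (n2 j) * q^2)) by ring. lra. }
    pose proof (Rle_abs (- (b * n2 j * q^4))) as Hr. rewrite Rabs_Ropp in Hr.
    assert (n2 j * (b*q^4 + n2 j*q^2 + n1 j) = 0) by (rewrite E; ring).
    assert (n2 j * (b*q^4 + n2 j*q^2 + n1 j) = b * n2 j * q^4 + n2 j * n2 j * q^2 + n1 j * n2 j) by ring.
    lra.
  - intros j Hj. apply Haft. apply Aft; auto.
  - intros eps Heps.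
    set (X1 := Rmin (eps*eps/2) (Rabs B0/(8*Rabs b))).
    assert (HX1: 0 < X1) by (apply Rmin_pos; [nra| apply Rdiv_lt_0_compat; lra]).
    assert (HX1a: X1 <= eps*eps/2) by apply Rmin_l.
    assert (HX1b: X1 <= Rabs B0/(8*Rabs b)) by apply Rmin_r.
    set (del := Rmin eta (Rabs B0 * X1/(6*Rabs D))).
    assert (Hdel: 0 < del) by (apply Rmin_pos; [lra| apply Rdiv_lt_0_compat; nra]).
    exists del. split; auto. intros j Hj.
    assert (Hd1: del <= eta) by apply Rmin_l.
    assert (Hd2: del <= Rabs B0 * X1/(6*Rabs D)) by apply Rmin_r.
    assert (Hj0: j <> j0) by (intro; subst; lra).
    assert (Hjr': Rabs (j - j0) < del) by (rewrite Habs; unfold Rabs; destruct (Rcase_abs (s*(j-j0))); lra).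
    assert (Hjr: Rabs (j - j0) < eta) by lra.
    pose proof (Aft j ltac:(lra)) as HA. destruct (N2 j Hjr) as [HB HBl].
    destruct (N1 j Hj0 Hjr) as [_ HAb].
    set (A := n1 j) in *. set (B := n2 j) in *.
    assert (HAB: A * B < 0).
    { assert (0 < -(A*B)); [|lra].
      apply (pos_of_mul _ ((w*a)*(w*a)) ((-(w*a*A))*(w*a*B))). apply Rsqr_pos_lt; auto. ring.
      apply Rmult_lt_0_compat; lra. }
    assert (HBp: 0 < Rabs B) by lra.
    assert (Hh6: Rabs (j - j0) * (6 * Rabs D) < Rabs B0 * X1).
    { assert (Rabs (j - j0) < Rabs B0 * X1/(6*Rabs D)) by lra.
      apply Rmult_lt_compat_r with (r := 6 * Rabs D) in H; [|lra].
      unfold Rdiv in H. rewrite Rmult_assoc, Rinv_l in H by lra. lra. }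
    assert (HAs: Rabs A < Rabs B * X1 / 2).
    { assert (Rabs B0 * X1 <= 2 * Rabs B * X1) by (apply Rmult_le_compat_r; lra). lra. }
    assert (HbX: Rabs b * X1 <= Rabs B / 4).
    { assert (X1 * (8 * Rabs b) <= Rabs B0).
      { apply Rmult_le_compat_r with (r := 8 * Rabs b) in HX1b; [|lra].
        unfold Rdiv in HX1b. rewrite Rmult_assoc, Rinv_l in HX1b by lra. lra. }
      lra. }
    assert (HBB: B * B = Rabs B * Rabs B) by (rewrite <- Rabs_mult; symmetry; apply Rabs_right; apply Rle_ge, Rle_0_sqr).
    assert (Hphi1: 0 < B * (b*X1^2 + B*X1 + A)).
    { assert (T1: - (b*B*(X1*X1)) <= Rabs b * X1 * (Rabs B * X1)).
      { pose proof (Rle_abs (- (b*B*(X1*X1)))) as T. rewrite Rabs_Ropp, !Rabs_mult in T.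
        rewrite (Rabs_right X1) in T by lra. replace (Rabs b * X1 * (Rabs B * X1)) with (Rabs b * Rabs B * (X1*X1)) by ring. lra. }
      assert (T2: - (A*B) <= Rabs A * Rabs B) by (pose proof (Rle_abs (-(A*B))) as T; rewrite Rabs_Ropp, Rabs_mult in T; lra).
      assert (T3: Rabs A * Rabs B < Rabs B * X1 / 2 * Rabs B) by (apply Rmult_lt_compat_r; lra).
      assert (T4: Rabs b * X1 * (Rabs B * X1) <= Rabs B / 4 * (Rabs B * X1)) by (apply Rmult_le_compat_r; [apply Rmult_le_pos|]; lra).
      assert (E: B * (b*X1^2 + B*X1 + A) = b*B*(X1*X1) + B*B*X1 + A*B) by ring.
      assert (E2: Rabs B * X1 / 2 * Rabs B = (Rabs B * Rabs B) * X1 / 2) by field.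
      assert (E3: Rabs B / 4 * (Rabs B * X1) = (Rabs B * Rabs B) * X1 / 4) by field.
      assert (E4: B*B*X1 = (Rabs B * Rabs B) * X1) by (rewrite HBB; ring).
      lra. }
    assert (Hsgn: (b*0^2 + B*0 + A) * (b*X1^2 + B*X1 + A) <= 0).
    { replace (b*0^2 + B*0 + A) with A by ring.
      assert (0 < - (A * (b*X1^2 + B*X1 + A))); [|lra].
      apply (pos_of_mul _ (B*B) ((-(A*B)) * (B * (b*X1^2 + B*X1 + A)))).
      apply Rsqr_pos_lt; intro E; rewrite E, Rabs_R0 in HBp; lra. ring. apply Rmult_lt_0_compat; lra. }
    destruct (IVT_cor (fun X => b*X^2 + B*X + A) 0 X1 (poly_cont b B A) ltac:(lra) Hsgn) as [X [HX HXr]].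
    assert (HXp: 0 < X).
    { destruct (Req_dec X 0) as [E|E]; [|lra]. exfalso. rewrite E in HXr.
      replace (b*0^2 + B*0 + A) with A in HXr by ring. rewrite HXr in HAB. lra. }
    set (q := sqrt X).
    assert (Hq: 0 < q) by (apply sqrt_lt_R0; auto).
    assert (Hq2: q^2 = X) by (unfold q; simpl; rewrite Rmult_1_r; apply sqrt_sqrt; lra).
    exists q, 0. split; [intros [E _]; lra|]. split; [|split].
    + unfold dist2. rewrite !Rminus_0_r. replace (q^2 + 0^2) with X by (rewrite <- Hq2; ring).
      rewrite <- (sqrt_Rsqr eps) by lra. assert (0 < eps*eps) by (apply Rmult_lt_0_compat; lra).
      apply sqrt_lt_1; [lra| unfold Rsqr; lra | unfold Rsqr; lra].
    + apply sing_HH; auto. split; auto. replace (q^4) with (X^2) by (rewrite <- Hq2; ring).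
      rewrite Hq2, HXr. ring.
    + apply Hkind. lra. replace (q^4) with (X^2) by (rewrite <- Hq2; ring). rewrite Hq2. auto.
      rewrite Hq2.
      assert (P1: 0 < (2*b*X + B) * B).
      { assert (T: - (2*b*X*B) <= 2 * (Rabs b * X) * Rabs B).
        { pose proof (Rle_abs (-(2*b*X*B))) as T. rewrite Rabs_Ropp, !Rabs_mult in T.
          rewrite (Rabs_right 2), (Rabs_right X) in T by lra. lra. }
        assert (Rabs b * X <= Rabs b * X1) by (apply Rmult_le_compat_l; [apply Rabs_pos|lra]).
        assert (2 * (Rabs b * X) * Rabs B <= 2 * (Rabs B / 4) * Rabs B) by (apply Rmult_le_compat_r; lra).
        assert ((2*b*X + B) * B = 2*b*X*B + B*B) by ring.
        assert (0 < Rabs B * Rabs B) by (apply Rmult_lt_0_compat; lra).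
        lra. }
      apply Rlt_gt. apply (pos_of_mul _ (B*B) ((w*a*B) * ((2*b*X+B)*B))).
      apply Rsqr_pos_lt; intro E; rewrite E, Rabs_R0 in HBp; lra. ring. apply Rmult_lt_0_compat; lra.
Qed.


Lemma sm_dx (f : R -> R -> R) ds : smooth2 f -> forall j t,
  is_derive (fun x => iter_partial ds f x t) j (Derive (fun x => iter_partial ds f x t) j).
Proof. intros H j t. apply Derive_correct. apply (H ds j t). Qed.
Lemma sm_dy (f : R -> R -> R) ds : smooth2 f -> forall j t,
  is_derive (fun y => iter_partial ds f j y) t (Derive (fun y => iter_partial ds f j y) t).
Proof. intros H j t. apply Derive_correct. apply (H ds j t). Qed.

Lemma sm_cont (f : R -> R -> R) ds : smooth2 f -> forall eps : posreal, exists delta : posreal,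
  forall u v, Rabs u < delta -> Rabs v < delta -> Rabs (iter_partial ds f u v - iter_partial ds f 0 0) < eps.
Proof.
  intros H eps. destruct (H ds 0 0) as [_ [_ C]].
  apply (continuity_2d_pt_filterlim (iter_partial ds f) 0 0) in C.
  destruct (C eps) as [d Hd]. exists d. intros u v Hu Hv. apply Hd; rewrite Rminus_0_r; auto.
Qed.

Lemma mvt_R (f df : R -> R) a b : (forall x, Rmin a b <= x <= Rmax a b -> is_derive f x (df x)) ->
  exists c, Rabs c <= Rmax (Rabs a) (Rabs b) /\ f b - f a = df c * (b - a).
Proof.
  intros Hd. destruct (Req_dec a b) as [E|E].
  - subst. exists b. split. apply Rmax_l. ring.
  - destruct (MVT_gen f a b df) as [c [Hc Ec]].
    + intros x Hx. apply Hd. lra.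
    + intros x Hx. apply (deriv_cont f x (df x)). apply Hd. auto.
    + exists c. split; auto. unfold Rmin, Rmax in *. destruct (Rle_dec a b);
      unfold Rabs; repeat destruct Rcase_abs; destruct (Rle_dec _ _); lra.
Qed.

Lemma nu1_trans (f : R->R->R) : smooth2 f -> f 0 0 = 0 -> Derive (fun j => f j 0) 0 = 0 ->
  Derive (fun j => Derive (fun j' => f j' 0) j) 0 <> 0 -> Derive (fun t => f 0 t) 0 <> 0 ->
  exists eps, 0 < eps /\ forall tau j0, 0 < Rabs tau < eps -> Rabs j0 < eps -> f j0 tau = 0 ->
     Derive (fun j => f j tau) j0 <> 0.
Proof.
  intros Hs H00 H10 Hc Hd.
  set (N1 := fun j t => Derive (fun x => f x t) j).
  set (N11 := fun j t => Derive (fun x => N1 x t) j).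
  set (N12 := fun j t => Derive (fun y => N1 j y) t).
  set (Nt := fun j t => Derive (fun y => f j y) t).
  set (c := N11 0 0) in *. set (d := Nt 0 0) in *.
  assert (DN: forall j t, is_derive (fun x => f x t) j (N1 j t)) by exact (sm_dx f nil Hs).
  assert (DNt: forall j t, is_derive (fun y => f j y) t (Nt j t)) by exact (sm_dy f nil Hs).
  assert (DN1: forall j t, is_derive (fun x => N1 x t) j (N11 j t)) by exact (sm_dx f (false::nil) Hs).
  assert (DN1t: forall j t, is_derive (fun y => N1 j y) t (N12 j t)) by exact (sm_dy f (false::nil) Hs).
  assert (Hcp: 0 < Rabs c / 2) by (pose proof (Rabs_pos_lt c Hc); lra).
  assert (Hdp: 0 < Rabs d / 2) by (pose proof (Rabs_pos_lt d Hd); lra).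
  destruct (sm_cont f (false::false::nil) Hs (mkposreal _ Hcp)) as [d1 C11].
  destruct (sm_cont f (true::nil) Hs (mkposreal _ Hdp)) as [dt Ct].
  destruct (sm_cont f (true::false::nil) Hs (mkposreal _ Rlt_0_1)) as [d12 C12].
  change (forall u v, Rabs u < d1 -> Rabs v < d1 -> Rabs (N11 u v - c) < Rabs c / 2) in C11.
  change (forall u v, Rabs u < dt -> Rabs v < dt -> Rabs (Nt u v - d) < Rabs d / 2) in Ct.
  change (forall u v, Rabs u < d12 -> Rabs v < d12 -> Rabs (N12 u v - N12 0 0) < 1) in C12.
  set (r := Rmin d1 (Rmin dt d12)).
  assert (Hr: 0 < r) by (unfold r; repeat apply Rmin_pos; apply cond_pos).
  assert (Hr1: r <= d1) by apply Rmin_l.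
  assert (Hr2: r <= dt) by (unfold r; pose proof (Rmin_r d1 (Rmin dt d12)); pose proof (Rmin_l dt d12); lra).
  assert (Hr3: r <= d12) by (unfold r; pose proof (Rmin_r d1 (Rmin dt d12)); pose proof (Rmin_r dt d12); lra).
  set (M := Rabs (N12 0 0) + 1).
  assert (HM: 1 <= M) by (unfold M; pose proof (Rabs_pos (N12 0 0)); lra).
  set (eps := Rmin r (Rabs d * Rabs c / (16*M*M + 1))).
  assert (Hcc: 0 < Rabs c) by lra. assert (Hdd: 0 < Rabs d) by lra.
  exists eps. split. apply Rmin_pos; auto. apply Rdiv_lt_0_compat; nra.
  intros tau j0 [Ht0 Ht] Hj Hz HD0.
  change (N1 j0 tau = 0) in HD0.
  assert (He1: eps <= r) by apply Rmin_l.
  assert (He2: eps <= Rabs d * Rabs c / (16*M*M + 1)) by apply Rmin_r.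
  assert (R0: Rabs 0 = 0) by apply Rabs_R0.
  assert (Mx: forall x, 0 <= x -> Rmax 0 x = x) by (intros; apply Rmax_right; auto).
  assert (HJ0: 0 <= (Rabs j0)) by apply Rabs_pos.
  destruct (mvt_R (fun t => N1 0 t) (N12 0) 0 tau) as [c1 [Hc1 Ec1]]. intros; apply DN1t.
  rewrite R0, Mx in Hc1 by apply Rabs_pos.  change (N1 0 0) with (Derive (fun j => f j 0) 0) in Ec1. rewrite H10 in Ec1.
  assert (A1: Rabs (N12 0 c1) <= M).
  { pose proof (C12 0 c1 ltac:(rewrite R0; lra) ltac:(lra)).
    pose proof (Rabs_triang_inv (N12 0 c1) (N12 0 0)). unfold M. lra. }
  assert (A: Rabs (N1 0 tau) <= M * (Rabs tau)).
  { replace (N1 0 tau) with (N12 0 c1 * tau) by lra. rewrite Rabs_mult. 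
    apply Rmult_le_compat_r; auto. apply Rabs_pos. }
  destruct (mvt_R (fun x => N1 x tau) (fun x => N11 x tau) 0 j0) as [c2 [Hc2 Ec2]]. intros; apply DN1.
  rewrite R0, Mx in Hc2 by apply Rabs_pos.  simpl in Ec2. rewrite HD0 in Ec2.
  assert (B1: Rabs c / 2 <= Rabs (N11 c2 tau)).
  { pose proof (C11 c2 tau ltac:(lra) ltac:(lra)).
    pose proof (Rabs_triang_inv c (N11 c2 tau)). rewrite Rabs_minus_sym in H. lra. }
  assert (B: Rabs c / 2 * (Rabs j0) <= M * (Rabs tau)).
  { assert (Rabs (N1 0 tau) = Rabs (N11 c2 tau) * (Rabs j0)).
    { replace (N1 0 tau) with (- (N11 c2 tau * (j0 - 0))) by lra. rewrite Rabs_Ropp, Rabs_mult, Rminus_0_r. auto. }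
    assert (Rabs c / 2 * (Rabs j0) <= Rabs (N11 c2 tau) * (Rabs j0)) by (apply Rmult_le_compat_r; auto). lra. }
  destruct (mvt_R (fun x => f x tau) (fun x => N1 x tau) 0 j0) as [c4 [Hc4 Ec4]]. intros; apply DN.
  rewrite R0, Mx in Hc4 by apply Rabs_pos.  simpl in Ec4. rewrite Hz in Ec4.
  destruct (mvt_R (fun x => N1 x tau) (fun x => N11 x tau) 0 c4) as [c3 [Hc3 Ec3]]. intros; apply DN1.
  rewrite R0, Mx in Hc3 by apply Rabs_pos. simpl in Ec3.
  assert (C1: Rabs (N11 c3 tau) <= 3 * Rabs c / 2).
  { pose proof (C11 c3 tau ltac:(lra) ltac:(lra)).
    pose proof (Rabs_triang_inv (N11 c3 tau) c). lra. }
  assert (C: Rabs (N1 c4 tau) <= M * (Rabs tau) + 3 * Rabs c / 2 * (Rabs j0)).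
  { replace (N1 c4 tau) with (N1 0 tau + N11 c3 tau * (c4 - 0)) by lra. rewrite Rminus_0_r.
    pose proof (Rabs_triang (N1 0 tau) (N11 c3 tau * c4)).
    rewrite Rabs_mult in H.
    assert (Rabs (N11 c3 tau) * Rabs c4 <= 3 * Rabs c / 2 * (Rabs j0)).
    { apply Rmult_le_compat; auto using Rabs_pos. }
    lra. }
  assert (D: Rabs (f 0 tau) <= (M * (Rabs tau) + 3 * Rabs c / 2 * (Rabs j0)) * (Rabs j0)).
  { replace (f 0 tau) with (- (N1 c4 tau * (j0 - 0))) by lra. rewrite Rabs_Ropp, Rabs_mult, Rminus_0_r.
    apply Rmult_le_compat_r; auto. }
  destruct (mvt_R (fun t => f 0 t) (Nt 0) 0 tau) as [c5 [Hc5 Ec5]]. intros; apply DNt.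
  rewrite R0, Mx in Hc5 by apply Rabs_pos.  simpl in Ec5. rewrite H00 in Ec5.
  assert (E1: Rabs d / 2 <= Rabs (Nt 0 c5)).
  { pose proof (Ct 0 c5 ltac:(rewrite R0; lra) ltac:(lra)).
    pose proof (Rabs_triang_inv d (Nt 0 c5)). rewrite Rabs_minus_sym in H. lra. }
  assert (E: Rabs d / 2 * (Rabs tau) <= Rabs (f 0 tau)).
  { replace (f 0 tau) with (Nt 0 c5 * tau) by lra. rewrite Rabs_mult. 
    apply Rmult_le_compat_r; auto. apply Rabs_pos. }
  assert (F1: Rabs c * (Rabs j0) <= 2 * M * (Rabs tau)) by lra.
  assert (F2: Rabs d * (Rabs tau) <= 2 * (M * (Rabs tau) + 3 * Rabs c / 2 * (Rabs j0)) * (Rabs j0)) by lra.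
  assert (F3: Rabs c * (Rabs d * (Rabs tau)) <= 16 * M * M * (Rabs tau) * (Rabs tau)).
  { assert (Rabs c * (Rabs d * (Rabs tau)) <= Rabs c * (2 * (M * (Rabs tau) + 3 * Rabs c / 2 * (Rabs j0)) * (Rabs j0))) by
      (apply Rmult_le_compat_l; lra).
    assert (Rabs c * (2 * (M * (Rabs tau) + 3 * Rabs c / 2 * (Rabs j0)) * (Rabs j0)) = 2 * M * (Rabs tau) * (Rabs c * (Rabs j0)) + 3 * (Rabs c * (Rabs j0)) * (Rabs c * (Rabs j0))) by field.
    assert (2 * M * (Rabs tau) * (Rabs c * (Rabs j0)) <= 2 * M * (Rabs tau) * (2 * M * (Rabs tau))) by (apply Rmult_le_compat_l; nra).
    assert ((Rabs c * (Rabs j0)) * (Rabs c * (Rabs j0)) <= (2 * M * (Rabs tau)) * (2 * M * (Rabs tau))) by (apply Rmult_le_compat; nra).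
    lra. }
  assert (F4: Rabs c * Rabs d <= 16 * M * M * (Rabs tau)).
  { apply Rmult_le_reg_r with (Rabs tau); auto.
    replace (Rabs c * Rabs d * Rabs tau) with (Rabs c * (Rabs d * Rabs tau)) by ring.
    replace (16 * M * M * Rabs tau * Rabs tau) with (16 * M * M * (Rabs tau) * (Rabs tau)) by ring. lra. }
  assert (F5: (Rabs tau) * (16*M*M + 1) < Rabs d * Rabs c).
  { assert ((Rabs tau) < Rabs d * Rabs c / (16*M*M + 1)) by lra.
    apply Rmult_lt_compat_r with (r := 16*M*M+1) in H; [|nra].
    replace (Rabs d * Rabs c / (16*M*M+1) * (16*M*M+1)) with (Rabs d * Rabs c) in H by (field; nra). lra. }
  lra.
Qed.


Theorem lemma2p3 (a b : R) (nu1 nu2 : R -> R -> R) :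
  a <> 0 -> b <> 0 ->
  smooth2 nu1 -> smooth2 nu2 ->
  nu1 0 0 = 0 ->
  Derive (fun j => nu1 j 0) 0 = 0 ->
  Derive (fun j => Derive (fun j' => nu1 j' 0) j) 0 <> 0 ->
  Derive (fun t => nu1 0 t) 0 <> 0 ->
  exists eps : R, 0 < eps /\
    forall tau j0 : R, 0 < Rabs tau < eps -> Rabs j0 < eps ->
      nu1 j0 tau = 0 -> nu2 j0 tau <> 0 ->
      (a * nu2 j0 tau < 0 -> dual_hamiltonian_flip (Hfam a b nu1 nu2 tau) j0) /\
      (a * nu2 j0 tau > 0 -> hamiltonian_flip (Hfam a b nu1 nu2 tau) j0).
Proof.
  intros Ha Hb Hs1 Hs2 H00 H10 Hc Hd.
  destruct (nu1_trans nu1 Hs1 H00 H10 Hc Hd) as [eps [He K]].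
  exists eps. split; auto. intros tau j0 Ht Hj Hz Hn2.
  set (D := Derive (fun j => nu1 j tau) j0).
  assert (HD: D <> 0) by (apply K; auto).
  assert (Hder: is_derive (fun j => nu1 j tau) j0 D) by exact (sm_dx nu1 nil Hs1 j0 tau).
  assert (Hc2: continuous (fun j => nu2 j tau) j0).
  { apply (ex_derive_continuous (fun j => nu2 j tau)). exact (proj1 (Hs2 nil j0 tau)). }
  split.
  - intros Hneg. unfold dual_hamiltonian_flip.
    change (flip_type false is_saddle (fun j => HH a b ((fun j => nu1 j tau) j) ((fun j => nu2 j tau) j)) j0).
    apply (flip_gen false is_saddle (-1) a b (fun j => nu1 j tau) (fun j => nu2 j tau) j0 D); auto.
    + intros A B HA. apply unstab; auto. lra.
    + intros A B HA. apply stab. lra.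
    + intros A B q Hq E S. apply kind_saddle; auto. lra.
    + simpl. lra.
  - intros Hpos. unfold hamiltonian_flip.
    change (flip_type true is_centre (fun j => HH a b ((fun j => nu1 j tau) j) ((fun j => nu2 j tau) j)) j0).
    apply (flip_gen true is_centre 1 a b (fun j => nu1 j tau) (fun j => nu2 j tau) j0 D); auto.
    + intros A B HA. apply stab. lra.
    + intros A B HA. apply unstab; auto. lra.
    + intros A B q Hq E S. apply kind_centre; auto. lra.
    + simpl. lra.
Qed.
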